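(* Let $\mathcal{A}=(\mathcal{H},|s_0\rangle,\Sigma,\{U_\sigma\},F)$ be a quantum automaton, $w\in\Sigma^\omega$ and $\lambda\in[0,1)$. Then $w\in\mathcal{L}^{>\lambda}(\mathcal{A}|\mathrm{D})$ if and only if there exist a real $\varepsilon>0$ and a unit vector $|\psi\rangle\in F$ such that $w=u_0u_1u_2\cdots$ with finite words $u_i$ satisfying: $u_0\in\mathcal{L}^{>\lambda+\varepsilon}(\mathcal{A}_{s_0,\psi}|\mathrm{MO})$, and $u_1,u_2,\ldots\in\mathcal{L}^{>\lambda+\varepsilon}(\mathcal{A}_{\psi,\psi}|\mathrm{MO})\setminus\{\epsilon\}$.
   Context: A quantum automaton is a tuple $\mathcal{A}=(\mathcal{H},|s_0\rangle,\Sigma,\{U_\sigma:\sigma\in\Sigma\},F)$ where $\mathcal{H}$ is a finite-dimensional complex Hilbert space, $|s_0\rangle$ a unit vector, $\Sigma$ a finite alphabet, each $U_\sigma$ unitary, and $F$ a subspace. For finite $x=\sigma_1\cdots\sigma_m$, $U_x=U_{\sigma_m}\cdots U_{\sigma_1}$ ($U_\epsilon=I$, $\epsilon$ the empty word); for a quantum automaton $\mathcal{C}$ with initial state $|c_0\rangle$ and accepting space $G$ (projection $P_G$), $f^{\mathrm{MO}}_{\mathcal{C}}(x)=\|P_GU_x|c_0\rangle\|^2$ and $\mathcal{L}^{>\mu}(\mathcal{C}|\mathrm{MO})=\{x\in\Sigma^*:f^{\mathrm{MO}}_{\mathcal{C}}(x)>\mu\}$. For unit vectors $|u\rangle,|v\rangle\in\mathcal{H}$,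 $\mathcal{A}_{u,v}=(\mathcal{H},|u\rangle,\Sigma,\{U_\sigma\},\mathrm{span}\{|v\rangle\})$, so $f^{\mathrm{MO}}_{\mathcal{A}_{u,v}}(x)=|\langle v|U_x|u\rangle|^2$. Disturbing acceptance: for $w=\sigma_1\sigma_2\cdots\in\Sigma^\omega$, a unit $|\psi\rangle\in F$ and checkpoints $0\le n_1<n_2<\cdots$, the disturbing run is $|s_0\rangle$ and for $n\ge1$: $|s_n\rangle=U_{\sigma_n}|\psi\rangle$ if $n-1=n_i$ for some $i$, else $|s_n\rangle=U_{\sigma_n}|s_{n-1}\rangle$; $f^{\mathrm{D}}_{\mathcal{A}}(w)=\sup_{|\psi\rangle}\sup_{\{n_i\}}\inf_{i\ge1}|\langle\psi|s_{n_i}\rangle|^2$ over unit $|\psi\rangle\in F$ and strictly increasing checkpoint sequences, and $\mathcal{L}^{>\lambda}(\mathcal{A}|\mathrm{D})=\{w\in\Sigma^\omega:f^{\mathrm{D}}_{\mathcal{A}}(w)>\lambda\}$. *)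

(* Defs.v *)
From HB Require Import structures.
From mathcomp Require Import all_boot all_order all_algebra.
From mathcomp Require Import boolp classical_sets reals constructive_ereal ereal.
From mathcomp Require Import complex.
Set Implicit Arguments. Unset Strict Implicit. Unset Printing Implicit Defensive.
Import Order.TTheory GRing.Theory Num.Theory.
Local Open Scope ring_scope.
Local Open Scope classical_set_scope.

Section QA.
Variables (R : realType) (n : nat) (Sigma : finType).
Local Notation C := (R[i]).
Local Notation vec := 'cV[C]_n.

Definition csqnorm (z : C) : R := (complex.Re z) ^+ 2 + (complex.Im z) ^+ 2.

Definition inner (v u : vec) : C := \sum_(i < n) conjc (v i 0) * u i 0.

Definition unit_vec (v : vec) : Prop := inner v v = 1.

Definition adjoint (A : 'M[C]_n) : 'M[C]_n := (map_mx conjc A)^T.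
Definition unitary (A : 'M[C]_n) : Prop := adjoint A *m A = 1%:M.

(* Subspace F of H given as the row space of a matrix F; v in F iff v^T <= F *)
Definition in_subspace (F : 'M[C]_n) (v : vec) : Prop := (v^T <= F)%MS.

(* U_x = U_{s_m} ... U_{s_1} for x = s_1 ... s_m *)
Definition Uword (U : Sigma -> 'M[C]_n) (x : seq Sigma) : 'M[C]_n :=
  foldl (fun M s => U s *m M) 1%:M x.

Definition fMO_uv (U : Sigma -> 'M[C]_n) (u v : vec) (x : seq Sigma) : R :=
  csqnorm (inner v (Uword U x *m u)).

Definition LMO_uv (U : Sigma -> 'M[C]_n) (u v : vec) (mu : R) : set (seq Sigma) :=
  [set x | mu < fMO_uv U u v x].

(* infinite words w = s_1 s_2 ... are encoded as w : nat -> Sigma, w k = s_{k+1};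
   checkpoints n_1 < n_2 < ... are encoded as ns : nat -> nat, ns i = n_{i+1}. *)
Fixpoint drun (U : Sigma -> 'M[C]_n) (s0 psi : vec) (w : nat -> Sigma)
    (ns : nat -> nat) (k : nat) : vec :=
  match k with
  | 0 => s0
  | k'.+1 => U (w k') *m (if `[< exists i, ns i = k' >] then psi else drun U s0 psi w ns k')
  end.

Definition strictly_increasing (ns : nat -> nat) : Prop := forall i, (ns i < ns i.+1)%N.

Definition fD (U : Sigma -> 'M[C]_n) (s0 : vec) (F : 'M[C]_n) (w : nat -> Sigma) : \bar R :=
  ereal_sup [set r | exists psi ns, [/\ unit_vec psi, in_subspace F psi,
     strictly_increasing ns &
     r = ereal_inf [set ((csqnorm (inner psi (drun U s0 psi w ns (ns i))))%:E) | i in setT]]].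

Definition LD (U : Sigma -> 'M[C]_n) (s0 : vec) (F : 'M[C]_n) (lambda : R) : set (nat -> Sigma) :=
  [set w | (lambda%:E < fD U s0 F w)%E].

(* w = u_0 u_1 u_2 ... : every finite concatenation u_0 ... u_m is a prefix of w
   (this determines w when infinitely many u_i are nonempty). *)
Definition omega_concat (u : nat -> seq Sigma) (w : nat -> Sigma) : Prop :=
  forall m, let p := flatten [seq u i | i <- iota 0 m.+1] in p = mkseq w (size p).

End QA.

(* Main.v *)
Require Import Defs.
From HB Require Import structures.
From mathcomp Require Import all_boot all_order all_algebra.
From mathcomp Require Import boolp classical_sets reals constructive_ereal ereal.
From mathcomp Require Import complex.
From mathcomp Require Import lra zify.
Import Order.TTheory GRing.Theory Num.Theory.
Local Open Scope ring_scope.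
Local Open Scope classical_set_scope.

Definition cp (ns : nat -> nat) (k : nat) : Prop := exists i, ns i = k.
Definition seg {T : Type} (w : nat -> T) (a j : nat) : seq T := map w (iota a j).

Lemma Uword_rcons (R : realType) (n : nat) (Sigma : finType) (U : Sigma -> 'M[R[i]]_n) x s :
  Uword U (rcons x s) = U s *m Uword U x.
Proof. by rewrite /Uword foldl_rcons. Qed.

Lemma seg_S (T : Type) (w : nat -> T) a j : seg w a j.+1 = rcons (seg w a j) (w (a + j)%N).
Proof. by rewrite /seg -addn1 iotaD map_cat cats1. Qed.

Lemma seg_cat (T : Type) (w : nat -> T) a j k : seg w a (j + k) = seg w a j ++ seg w (a + j) k.
Proof. by rewrite /seg iotaD map_cat. Qed.

Lemma size_seg (T : Type) (w : nat -> T) a j : size (seg w a j) = j.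
Proof. by rewrite /seg size_map size_iota. Qed.

Lemma drun_from0 (R : realType) (n : nat) (Sigma : finType) (U : Sigma -> 'M[R[i]]_n)
  s0 psi w ns j : (forall t, (t < j)%N -> ~ cp ns t) ->
  drun U s0 psi w ns j = Uword U (seg w 0 j) *m s0.
Proof.
elim: j => [|j IH] H; first by rewrite /= /Uword /= mul1mx.
rewrite /= asboolF; last by apply: H.
rewrite IH; last by move=> t lt; apply: H; apply: ltnW.
by rewrite seg_S Uword_rcons mulmxA.
Qed.

Lemma drun_from (R : realType) (n : nat) (Sigma : finType) (U : Sigma -> 'M[R[i]]_n)
  s0 psi w ns a j : cp ns a -> (forall t, (0 < t < j)%N -> ~ cp ns (a + t)%N) -> (0 < j)%N ->
  drun U s0 psi w ns (a + j)%N = Uword U (seg w a j) *m psi.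
Proof.
move=> ca; elim: j => [|j IH] H // _.
case: j IH H => [|j] IH H.
  by rewrite addn1 /= asboolT // /seg /= /Uword /= mulmx1.
rewrite addnS /= asboolF; last by apply: H; rewrite ltnSn.
rewrite IH //; last by move=> t /andP[t0 tj]; apply: H; rewrite t0 /= ltnW.
by rewrite [seg w a j.+2]seg_S Uword_rcons mulmxA.
Qed.

Lemma mono_le {ns} : strictly_increasing ns -> forall i j, (i <= j)%N -> (ns i <= ns j)%N.
Proof.
move=> H i j /subnKC <-; elim: (j - i)%N => [|d IH]; first by rewrite addn0.
by rewrite addnS (leq_trans IH) // ltnW.
Qed.

Lemma flat_S (T : Type) (u : nat -> seq T) m :
  flatten [seq u i | i <- iota 0 m.+2] = flatten [seq u i | i <- iota 0 m.+1] ++ u m.+1.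
Proof. by rewrite -(addn1 m.+1) iotaD map_cat flatten_cat /= cats0 add0n. Qed.

Lemma flat_0 (T : Type) (u : nat -> seq T) :
  flatten [seq u i | i <- iota 0 1] = u 0%N.
Proof. by rewrite /= cats0. Qed.

Theorem proposition6 (R : realType) (n : nat) (Sigma : finType)
  (s0 : 'cV[R[i]]_n) (U : Sigma -> 'M[R[i]]_n) (F : 'M[R[i]]_n)
  (hs0 : unit_vec s0) (hU : forall s, unitary (U s))
  (w : nat -> Sigma) (lambda : R) (hl0 : 0 <= lambda) (hl1 : lambda < 1) :
  w \in LD U s0 F lambda <->
  exists (eps : R) (psi : 'cV[R[i]]_n), [/\ 0 < eps, unit_vec psi, in_subspace F psi &
    exists u : nat -> seq Sigma, [/\ omega_concat u w,
      u 0%N \in LMO_uv U s0 psi (lambda + eps) &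
      forall k, (0 < k)%N -> u k \in LMO_uv U psi psi (lambda + eps) /\ u k <> [::]]].
Proof.
rewrite in_setE /LD /=; split.
- move=> /ereal_sup_gt [y [psi [ns [upsi Fpsi sns ->]]]] ly.
  set T := [set _ | i in _] in ly.
  set t := fun i => csqnorm (inner psi (drun U s0 psi w ns (ns i))).
  have tT : forall i, T (t i)%:E by move=> i; exists i.
  have [r yr] : exists r, ereal_inf T = r%:E.
    move: ly (ereal_inf_lbound (tT 0%N)); case: (ereal_inf T) => // r _ _.
    by exists r.
  have rt : forall i, r <= t i.
    by move=> i; rewrite -lee_fin -yr; apply: ereal_inf_lbound.
  have lr : lambda < r by rewrite -lte_fin -yr.
  exists ((r - lambda) / 2), psi; split => //; first lra.
  exists (fun k => if k is k'.+1 then seg w (ns k') (ns k'.+1 - ns k') else seg w 0 (ns 0%N)).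
  split.
  + have P : forall m, flatten [seq (fun k => if k is k'.+1 then seg w (ns k') (ns k'.+1 - ns k')
        else seg w 0 (ns 0%N)) i | i <- iota 0 m.+1] = seg w 0 (ns m).
      elim=> [|m IH]; first by rewrite flat_0.
      by rewrite flat_S IH -seg_cat subnKC // ltnW.
    by move=> m; cbv zeta beta; rewrite P size_seg.
  + rewrite in_setE /LMO_uv /fMO_uv /=.
    rewrite -(@drun_from0 _ _ _ U s0 psi w ns (ns 0%N)); last first.
      move=> q qn [m E]; move: (mono_le sns _ _ (leq0n m)); rewrite E; lia.
    by apply: lt_le_trans (rt 0%N); lra.
  + case=> // k _; split; last first.
      by move=> /(congr1 size); rewrite size_seg /=; move: (sns k); lia.
    rewrite in_setE /LMO_uv /fMO_uv /=.
    rewrite -(@drun_from _ _ _ U s0 psi w ns (ns k)); first last.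
    * by move: (sns k); lia.
    * move=> q /andP[q0 q1] [m E].
      case: (ltnP m k.+1) => hm.
        by move: (mono_le sns _ _ (hm : (m <= k)%N)); rewrite E; lia.
      by move: (mono_le sns _ _ hm); rewrite E; lia.
    * by exists k.
    rewrite subnKC; last exact: ltnW.
    by apply: lt_le_trans (rt k.+1); lra.
- move=> [eps [psi [e0 upsi Fpsi [u [om u0 uk]]]]].
  set S := fun m => size (flatten [seq u i | i <- iota 0 m.+1]).
  have SS : forall m, S m.+1 = (S m + size (u m.+1))%N.
    by move=> m; rewrite /S flat_S size_cat.
  have sns : strictly_increasing S.
    move=> m; rewrite SS; have [_ h] := uk m.+1 isT.
    have : size (u m.+1) != 0%N by rewrite size_eq0; apply/eqP.
    lia.
  have Pseg : forall m, flatten [seq u i | i <- iota 0 m.+1] = seg w 0 (S m).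
    by move=> m; rewrite (om m).
  have u0E : u 0%N = seg w 0 (S 0%N) by rewrite -Pseg flat_0.
  have ukE : forall m, u m.+1 = seg w (S m) (size (u m.+1)).
    move=> m; have := Pseg m.+1; rewrite flat_S Pseg SS seg_cat add0n => E.
    by have := congr1 (drop (S m)) E; rewrite !drop_size_cat ?size_seg.
  apply: (@lt_le_trans _ _ (lambda + eps)%:E); first by rewrite lte_fin; lra.
  apply: (@le_trans _ _ (ereal_inf [set ((csqnorm (inner psi (drun U s0 psi w S (S i))))%:E) | i in setT])); last first.
    apply: ereal_sup_ubound; exists psi, S; split => //.
  apply/ereal_infP => _ [[|m] _ <-]; rewrite lee_fin.
  + rewrite (@drun_from0 _ _ _ U s0 psi w S (S 0%N)); last first.
      move=> q qn [m E]; move: (mono_le sns _ _ (leq0n m)); rewrite E; lia.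
    rewrite -u0E; apply: ltW; move: u0; rewrite in_setE /LMO_uv /fMO_uv; by [].
  + rewrite SS (@drun_from _ _ _ U s0 psi w S (S m)); first last.
    * have [_ h] := uk m.+1 isT.
      have : size (u m.+1) != 0%N by rewrite size_eq0; apply/eqP.
      lia.
    * move=> q /andP[q0 q1] [k E].
      case: (ltnP k m.+1) => hk.
        by move: (mono_le sns _ _ (hk : (k <= m)%N)); rewrite E; lia.
      by move: (mono_le sns _ _ hk); rewrite E SS; lia.
    * by exists m.
    rewrite -ukE; have [+ _] := uk m.+1 isT; rewrite in_setE /LMO_uv /fMO_uv => /ltW.
    by [].
Qed.
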